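(* Let $U$ be a nonempty finite set, $R$ a relation on $U$, and $M(R)$ the relation matroid induced by $R$. Then $cl_{M(R)}(X)=H_R(X)$ for all $X\subseteq U$ if and only if $R$ is an equivalence relation (reflexive, symmetric and transitive).
   Context: For $x\in U$, $RS_R(x)=\{y\in U:(x,y)\in R\}$. $\mathbf{I}(R)=\{X\subseteq U: \forall x,y\in X,\ x\neq y \Rightarrow RS_R(x)\neq RS_R(y)\}$; this is the family of independent sets of a matroid $M(R)=(U,\mathbf{I}(R))$, called the relation matroid induced by $R$. For a matroid $M$ with rank function $r_M(X)=\max\{|I|:I\subseteq X, I \text{ independent}\}$, the closure operator is $cl_M(X)=\{u\in U: r_M(X\cup\{u\})=r_M(X)\}$. The upper approximation operator of $R$ is $H_R(X)=\{x\in U: RS_R(x)\cap X\neq\emptyset\}$ for $X\subseteq U$. *)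

(* Defs.v *)
From mathcomp Require Import all_boot.
Set Implicit Arguments. Unset Strict Implicit. Unset Printing Implicit Defensive.

Section RelMatroid.
Variables (U : finType) (R : rel U).

Definition RS (x : U) : {set U} := [set y | R x y].

Definition rel_indep (X : {set U}) : bool :=
  [forall x in X, forall y in X, (x != y) ==> (RS x != RS y)].

Definition rel_rank (X : {set U}) : nat :=
  \max_(I in powerset X | rel_indep I) #|I|.

Definition rel_cl (X : {set U}) : {set U} :=
  [set u | rel_rank (u |: X) == rel_rank X].

Definition upper_approx (X : {set U}) : {set U} :=
  [set x | RS x :&: X != set0].

End RelMatroid.

(* Main.v *)
Require Import Defs.
From mathcomp Require Import all_boot.

Section L.
Variables (U : finType) (R : rel U).

Lemma rank_eq (X : {set U}) : rel_rank R X = #|[set RS R x | x in X]|.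
Proof.
apply/eqP; rewrite eqn_leq; apply/andP; split.
  apply/bigmax_leqP => I; rewrite inE => /andP [sIX indI].
  have inj : {in I &, injective (RS R)}.
    move=> x y xI yI E; apply/eqP; apply/negPn/negP => nxy.
    move/forall_inP: indI => /(_ x xI) /forall_inP /(_ y yI) /implyP /(_ nxy).
    by rewrite E eqxx.
  rewrite -(card_in_imset inj); apply: subset_leq_card; exact: imsetS.
set I := [set y in X | [pick z in X | RS R z == RS R y] == Some y].
have sIX : I \subset X by apply/subsetP => y; rewrite inE => /andP [].
have inj : {in I &, injective (RS R)}.
  move=> x y; rewrite !inE => /andP [_ /eqP px] /andP [_ /eqP py] E.
  by move: px; rewrite E py => -[].
have indI : rel_indep R I.
  apply/forall_inP => x xI; apply/forall_inP => y yI; apply/implyP => nxy.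
  apply/negP => /eqP E; by rewrite (inj _ _ xI yI E) eqxx in nxy.
have -> : [set RS R x | x in X] = [set RS R x | x in I].
  apply/eqP; rewrite eqEsubset (imsetS _ sIX) andbT.
  apply/subsetP => S /imsetP [x xX ->].
  case Ep: [pick t in X | RS R t == RS R x] => [z|]; last first.
    by move: Ep; case: pickP => // H _; move: (H x); rewrite xX eqxx.
  have := Ep; case: pickP => // z' /andP [zX /eqP Ez] [Ezz]; subst z'.
  apply/imsetP; exists z => //.
  rewrite inE zX /=.
  have -> : [pick t in X | RS R t == RS R z] = [pick t in X | RS R t == RS R x].
    by apply: eq_pick => t; rewrite Ez.
  by rewrite Ep.
rewrite (card_in_imset inj).
apply: (@leq_bigmax_cond _ _ _ I); by rewrite inE sIX.
Qed.
End L.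

Lemma cl_mem (U : finType) (R : rel U) (X : {set U}) u :
  (u \in rel_cl R X) = (RS R u \in [set RS R x | x in X]).
Proof.
rewrite inE !rank_eq imsetU1 cardsU1.
by case: (RS R u \in _) => /=; rewrite ?add0n ?eqxx // -[X in _ == X]add0n eqn_add2r.
Qed.

Theorem mainTheorem11 (U : finType) (R : rel U) (hU : 0 < #|U|) :
  (forall X : {set U}, rel_cl R X = upper_approx R X) <->
  [/\ reflexive R, symmetric R & transitive R].
Proof.
split.
  move=> H.
  have key : forall x y, R x y -> RS R x = RS R y.
    move=> x y Rxy.
    have : x \in upper_approx R [set y].
      rewrite inE; apply/set0Pn; exists y; by rewrite !inE Rxy eqxx.
    by rewrite -H cl_mem imset_set1 inE => /eqP.
  have refl : reflexive R.
    move=> x.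
    have : x \in rel_cl R [set x] by rewrite cl_mem imset_set1 inE.
    rewrite H inE => /set0Pn [y]; rewrite !inE => /andP [Rxy /eqP E]; by move: Rxy; rewrite E.
  have Rin : forall x y, (y \in RS R x) = R x y by move=> x y; rewrite inE.
  split => //.
    move=> x y; apply/idP/idP => Rxy.
      by rewrite -Rin -(key _ _ Rxy) Rin.
    by rewrite -Rin -(key _ _ Rxy) Rin.
  move=> y x z Rxy Ryz; by rewrite -Rin (key _ _ Rxy) (key _ _ Ryz) Rin.
case=> refl sym tr X; apply/setP => u.
rewrite cl_mem inE; apply/imsetP/set0Pn.
  case=> x xX E; exists x; rewrite !inE xX andbT; have : x \in RS R x by rewrite inE refl. by rewrite -E inE.
case=> x; rewrite !inE => /andP [Rux xX]; exists x => //.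
apply/setP => w; rewrite !inE; apply/idP/idP => H.
  by apply: (tr u) => //; rewrite sym.
exact: (tr x u w Rux H).
Qed.
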